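(* Let $G$ be a finite group, $K$ an idempotent semifield, and $V$ an indecomposable representation of $G$ over $K$. Let $K[G]$ be the regular representation. Then there is a subgroup $H\subseteq G$ such that $V$ is isomorphic (as a representation) to the quotient of $K[G]$ by the $K[G]$-module congruence generated by $g\sim gh$ for all $g\in G$, $h\in H$.
   Context: All semirings are commutative. A semifield is a semiring whose nonzero elements form a multiplicative group; idempotent means $a+a=a$ for all $a$. A representation of $G$ over $K$ is a $K$-linear action of $G$ on a free module $K^n$ (equivalently a $K[G]$-module that is free of finite rank over $K$); it is indecomposable if it is not a direct sum of two nontrivial $G$-stable submodules. The regular representation is the group semiring $K[G]$ viewed as a module over itself. *)

(* Defs.v *)
From HB Require Import structures.
From mathcomp Require Import all_boot all_order all_algebra all_fingroup.
Set Implicit Arguments. Unset Strict Implicit. Unset Printing Implicit Defensive.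
Import GRing.Theory.
Local Open Scope ring_scope.

Definition idempotent_semiring (K : comNzSemiRingType) : Prop :=
  forall a : K, a + a = a.
(* nonzero elements form a multiplicative group (commutativity, 1 given) *)
Definition semifield (K : comNzSemiRingType) : Prop :=
  forall x : K, x != 0 -> exists y : K, x * y = 1.

Definition is_rep (K : comNzSemiRingType) (gT : finGroupType) (n : nat)
  (rho : gT -> 'M[K]_n) : Prop :=
  rho 1%g = 1%:M /\ forall g h : gT, rho (g * h)%g = rho g *m rho h.

Definition submod (K : comNzSemiRingType) (n : nat) (W : 'cV[K]_n -> Prop) : Prop :=
  [/\ W 0, (forall v w, W v -> W w -> W (v + w)) &
      (forall (c : K) v, W v -> W (c *: v))].

Definition Gstable (K : comNzSemiRingType) (gT : finGroupType) (n : nat)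
  (rho : gT -> 'M[K]_n) (W : 'cV[K]_n -> Prop) : Prop :=
  forall g v, W v -> W (rho g *m v).

Definition nontrivial_sub (K : comNzSemiRingType) (n : nat) (W : 'cV[K]_n -> Prop) :=
  exists v, W v /\ v <> 0.

Definition direct_sum (K : comNzSemiRingType) (n : nat) (W1 W2 : 'cV[K]_n -> Prop) :=
  forall v, exists w, [/\ W1 w.1, W2 w.2, v = w.1 + w.2 &
     forall w', W1 w'.1 -> W2 w'.2 -> v = w'.1 + w'.2 -> w' = w].

Definition indecomposable (K : comNzSemiRingType) (gT : finGroupType) (n : nat)
  (rho : gT -> 'M[K]_n) : Prop :=
  (0 < n)%N /\
  ~ (exists W1 W2 : 'cV[K]_n -> Prop,
       [/\ submod W1 /\ submod W2, Gstable rho W1 /\ Gstable rho W2,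
           nontrivial_sub W1 /\ nontrivial_sub W2 & direct_sum W1 W2]).

Section GroupSemiring.
Variables (K : comNzSemiRingType) (gT : finGroupType).
Definition KG := {ffun gT -> K}.
Definition kg_zero : KG := [ffun _ => 0].
Definition kg_add (x y : KG) : KG := [ffun k => x k + y k].
Definition kg_scale (c : K) (x : KG) : KG := [ffun k => c * x k].
Definition kg_delta (g : gT) : KG := [ffun k => if k == g then 1 else 0].
Definition kg_mul (x y : KG) : KG := [ffun k => \sum_(g : gT) x g * y (g^-1 * k)%g].
Definition kg_act (g : gT) (x : KG) : KG := [ffun k => x (g^-1 * k)%g].

Definition kg_congr (R : KG -> KG -> Prop) : Prop :=
  [/\ (forall x, R x x), (forall x y, R x y -> R y x),
      (forall x y z, R x y -> R y z -> R x z),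
      (forall x y z, R x y -> R (kg_add x z) (kg_add y z)) &
      (forall x y z, R x y -> R (kg_mul z x) (kg_mul z y))].

Definition coset_congr (H : {group gT}) (x y : KG) : Prop :=
  forall R : KG -> KG -> Prop, kg_congr R ->
    (forall g h, h \in H -> R (kg_delta g) (kg_delta (g * h)%g)) -> R x y.
End GroupSemiring.

(* Main.v *)
Require Import Defs.
From HB Require Import structures.
From mathcomp Require Import all_boot all_order all_algebra all_fingroup.
Set Implicit Arguments. Unset Strict Implicit. Unset Printing Implicit Defensive.
Import GRing.Theory.
Local Open Scope ring_scope.

Section KFacts.
Variable K : comNzSemiRingType.
Hypothesis Kidem : idempotent_semiring K.
Hypothesis Ksf : semifield K.

Lemma zsf (a b : K) : a + b = 0 -> a = 0.
Proof. move=> h. by rewrite -[a]addr0 -h addrA Kidem. Qed.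

Lemma sum_nz (I : finType) (P : pred I) (F : I -> K) j :
  P j -> F j != 0 -> \sum_(i | P i) F i != 0.
Proof.
move=> Pj Fj; rewrite (bigD1 j) //=; apply/negP => /eqP /zsf /eqP.
by rewrite (negbTE Fj).
Qed.

Lemma sum_nz_ex (I : finType) (F : I -> K) :
  \sum_i F i != 0 -> exists i, F i != 0.
Proof.
move=> h; case: (boolP [exists i, F i != 0]) => [/existsP //|/existsPn H].
by move: h; rewrite big1 ?eqxx // => i _; apply/eqP; rewrite -[_ == _]negbK H.
Qed.

Lemma mul_nz (a b : K) : a != 0 -> b != 0 -> a * b != 0.
Proof.
move=> ha hb; apply/negP => /eqP hab.
have [y hy] := Ksf ha.
move/negP: hb; apply; apply/eqP.
by rewrite -[b]mul1r -hy mulrC mulrA (mulrC b) hab mul0r.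
Qed.

Lemma mul_cancel (a b c : K) : c != 0 -> a * c = b * c -> a = b.
Proof.
move=> hc h; have [y hy] := Ksf hc.
by rewrite -[a]mulr1 -[b]mulr1 -hy !mulrA h.
Qed.

Lemma torsion1 (c : K) m : (0 < m)%N -> c ^+ m = 1 -> c = 1.
Proof.
case: m => // m _ hm.
set s := \sum_(k < m.+1) c ^+ k.
have hs : s != 0 by apply: (@sum_nz _ predT _ ord0) => //=; rewrite expr0 oner_neq0.
apply: (mul_cancel hs); rewrite mul1r /s mulr_sumr.
rewrite big_ord_recr /= big_ord_recl /= expr0 -exprS hm addrC.
congr (_ + _); apply: eq_bigr => i _; by rewrite -exprS.
Qed.
End KFacts.

Section Rep.
Variable gT : finGroupType.
Variable K : comNzSemiRingType.
Hypothesis Kidem : idempotent_semiring K.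
Hypothesis Ksf : semifield K.
Variable n : nat.
Variable rho : gT -> 'M[K]_n.
Hypothesis rep : is_rep rho.

Lemma rhoM g h : rho (g * h)%g = rho g *m rho h.
Proof. by case: rep. Qed.
Lemma rho1 : rho 1%g = 1%:M.
Proof. by case: rep. Qed.
Lemma rhoV g : rho g *m rho g^-1%g = 1%:M.
Proof. by rewrite -rhoM mulgV rho1. Qed.
Lemma rhoV' g : rho g^-1%g *m rho g = 1%:M.
Proof. by rewrite -rhoM mulVg rho1. Qed.

Lemma prod_nz m p q (A : 'M[K]_(m, p)) (B : 'M[K]_(p, q)) i k j :
  A i k != 0 -> B k j != 0 -> (A *m B) i j != 0.
Proof.
move=> hA hB; rewrite mxE; apply: (@sum_nz _ Kidem _ predT _ k) => //.
exact: mul_nz.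
Qed.

Lemma id_nz (i j : 'I_n) : (1%:M : 'M[K]_n) i j != 0 -> i = j.
Proof. by rewrite mxE; case: (eqVneq i j) => // _; rewrite eqxx. Qed.

Lemma id_diag (i : 'I_n) : (1%:M : 'M[K]_n) i i = 1.
Proof. by rewrite mxE eqxx. Qed.

Lemma id_off (i j : 'I_n) : i != j -> (1%:M : 'M[K]_n) i j = 0.
Proof. by rewrite mxE => /negbTE ->; by []. Qed.

Lemma col_ex g j : exists i, rho g i j != 0.
Proof.
have : (rho g^-1%g *m rho g) j j != 0 by rewrite rhoV' id_diag oner_neq0.
rewrite mxE => /sum_nz_ex [i hi]; exists i.
by apply/negP => /eqP h; move: hi; rewrite h mulr0 eqxx.
Qed.

Lemma Linv g i j : rho g i j != 0 -> rho g^-1%g j i != 0.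
Proof.
move=> hij.
have : (rho g^-1%g *m rho g) j j != 0 by rewrite rhoV' id_diag oner_neq0.
rewrite mxE => /sum_nz_ex [m hm].
have h1 : rho g^-1%g j m != 0 by apply/negP => /eqP h; move: hm; rewrite h mul0r eqxx.
have h2 : rho g m j != 0 by apply/negP => /eqP h; move: hm; rewrite h mulr0 eqxx.
have := prod_nz hij h1; rewrite rhoV => /id_nz ->; exact h1.
Qed.

Lemma col_uniq g i k j : rho g i j != 0 -> rho g k j != 0 -> i = k.
Proof.
move=> hi hk; have := prod_nz hk (Linv hi); rewrite rhoV => /id_nz ->; done.
Qed.

Variable i0 : 'I_n.
Definition inorb (i : 'I_n) := [exists g, rho g i i0 != 0].

Lemma orb_closed g i j : rho g i j != 0 -> inorb j -> inorb i.
Proof.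
rewrite /inorb => hij /existsP [g' hg']; apply/existsP; exists (g * g')%g.
by rewrite rhoM; apply: prod_nz hij hg'.
Qed.

Lemma orb_i0 : inorb i0.
Proof. by rewrite /inorb; apply/existsP; exists 1%g; rewrite rho1 id_diag oner_neq0. Qed.

Lemma transitive : indecomposable rho -> forall i, inorb i.
Proof.
case=> _ H i; case: (boolP (inorb i)) => // hi; exfalso; apply: H.
pose W1 := fun v : 'cV[K]_n => forall j, ~~ inorb j -> v j 0 = 0.
pose W2 := fun v : 'cV[K]_n => forall j, inorb j -> v j 0 = 0.
exists W1, W2; split.
- split; split.
  + by move=> j _; rewrite mxE.
  + by move=> v w hv hw j hj; rewrite mxE hv // hw // addr0.
  + by move=> c v hv j hj; rewrite mxE hv // mulr0.
  + by move=> j _; rewrite mxE.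
  + by move=> v w hv hw j hj; rewrite mxE hv // hw // addr0.
  + by move=> c v hv j hj; rewrite mxE hv // mulr0.
- split.
  + move=> g v hv j hj; rewrite mxE big1 // => k _.
    case: (boolP (inorb k)) => hk; last by rewrite hv // mulr0.
    case: (eqVneq (rho g j k) 0) => [-> | hne]; first by rewrite mul0r.
    by move: hj; rewrite (orb_closed hne hk).
  + move=> g v hv j hj; rewrite mxE big1 // => k _.
    case: (boolP (inorb k)) => hk; first by rewrite hv // mulr0.
    case: (eqVneq (rho g j k) 0) => [-> | hne]; first by rewrite mul0r.
    by move: hk; rewrite (orb_closed (Linv hne) hj).
- split.
  + exists (col i0 1%:M); split.
    * move=> j hj; rewrite mxE id_off //; apply/negP => /eqP e.
      by move: hj; rewrite e orb_i0.
    * by move/matrixP => /(_ i0 0); rewrite !mxE eqxx => /eqP; rewrite oner_eq0.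
  + exists (col i 1%:M); split.
    * move=> j hj; rewrite mxE id_off //; apply/negP => /eqP e.
      by move: hj; rewrite e (negbTE hi).
    * by move/matrixP => /(_ i 0); rewrite !mxE eqxx => /eqP; rewrite oner_eq0.
- move=> v.
  exists (\col_j (if inorb j then v j 0 else 0), \col_j (if inorb j then 0 else v j 0)).
  split => /=.
  + by move=> j hj; rewrite mxE (negbTE hj).
  + by move=> j hj; rewrite mxE hj.
  + apply/matrixP => j k; rewrite (ord1 k) !mxE.
    by case: (inorb j); rewrite ?addr0 ?add0r.
  + case=> w1 w2 /= h1 h2 ->; congr (_, _); apply/matrixP => j k;
      rewrite (ord1 k) !mxE; case: (boolP (inorb j)) => hj.
    * by rewrite (h2 j hj) addr0.
    * by rewrite (h1 j hj).
    * by rewrite (h2 j hj).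
    * by rewrite (h1 j hj) add0r.
Qed.
End Rep.

Section Main.
Variable gT : finGroupType.
Variable K : comNzSemiRingType.
Hypothesis Kidem : idempotent_semiring K.
Hypothesis Ksf : semifield K.
Variable n : nat.
Variable rho : gT -> 'M[K]_n.
Hypothesis rep : is_rep rho.
Variable i0 : 'I_n.

Definition vv g : 'cV[K]_n := col i0 (rho g).

Lemma vM g h : vv (g * h)%g = rho g *m vv h.
Proof. by rewrite /vv !colE (rhoM rep) mulmxA. Qed.

Lemma vE g i : vv g i 0 = rho g i i0.
Proof. by rewrite mxE. Qed.

Definition phi (x : KG K gT) : 'cV[K]_n := \sum_g x g *: vv g.

Lemma phi_add x y : phi (kg_add x y) = phi x + phi y.
Proof.
rewrite /phi -big_split /=; apply: eq_bigr => g _; by rewrite ffunE scalerDl.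
Qed.

Lemma phi_scale c x : phi (kg_scale c x) = c *: phi x.
Proof.
rewrite /phi scaler_sumr; apply: eq_bigr => g _; by rewrite ffunE scalerA.
Qed.

Lemma phi_act g x : phi (kg_act g x) = rho g *m phi x.
Proof.
rewrite /phi mulmx_sumr (reindex_inj (mulgI g)) /=; apply: eq_bigr => k _.
by rewrite ffunE mulKg vM scalemxAr.
Qed.

Lemma phi_delta g : phi (kg_delta K g) = vv g.
Proof.
rewrite /phi (bigD1 g) //= big1 ?addr0 => [|k hk]; rewrite ffunE.
  by rewrite eqxx scale1r.
by rewrite (negbTE hk) scale0r.
Qed.

Lemma phi_mul z x : phi (kg_mul z x) = \sum_g z g *: (rho g *m phi x).
Proof.
have e : forall k, kg_mul z x k *: vv k = \sum_g (z g * x (g^-1 * k)%g) *: vv k.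
  by move=> k; rewrite ffunE scaler_suml.
rewrite {1}/phi (eq_bigr _ (fun k _ => e k)) exchange_big /=.
apply: eq_bigr => g _; rewrite -phi_act /phi scaler_sumr; apply: eq_bigr => k _.
by rewrite ffunE scalerA.
Qed.

Definition Hset := [set g | vv g == vv 1%g].

Lemma Hgroup : group_set Hset.
Proof.
apply/group_setP; split; first by rewrite inE.
move=> g h; rewrite !inE => /eqP hg /eqP hh.
by rewrite vM hh -vM mulg1 hg.
Qed.

Definition HH : {group gT} := Group Hgroup.

Lemma inHH h : (h \in HH) = (vv h == vv 1%g).
Proof. by rewrite inE. Qed.

Let cu := col_uniq Kidem Ksf rep.
Let pnz := @prod_nz K Kidem Ksf.

Lemma vtors h c : vv h = c *: vv 1%g -> c = 1.
Proof.
move=> hh.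
have hk : forall k, vv (h ^+ k)%g = c ^+ k *: vv 1%g.
  elim => [|k IH]; first by rewrite expg0 expr0 scale1r.
  by rewrite expgS vM IH -scalemxAr -vM mulg1 hh scalerA exprS mulrC.
have := hk #[h]%g; rewrite expg_order => /matrixP /(_ i0 0).
rewrite [RHS]mxE !vE (rho1 rep) id_diag mulr1 => e.
exact: (torsion1 Kidem Ksf (order_gt0 h) (esym e)).
Qed.

Definition sig g : 'I_n := odflt i0 [pick i | rho g i i0 != 0].

Lemma sig_nz g : rho g (sig g) i0 != 0.
Proof.
rewrite /sig; case: pickP => [i //|H] /=.
have [i hi] := col_ex rep g i0; by rewrite H in hi.
Qed.

Lemma sig_uniq g i : rho g i i0 != 0 -> i = sig g.
Proof. move=> hi; exact: cu hi (sig_nz g). Qed.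

Lemma LinkH g k : sig g = sig k -> (g^-1 * k)%g \in HH.
Proof.
move=> e; set h := (g^-1 * k)%g.
have hnz : rho h i0 i0 != 0.
  rewrite /h (rhoM rep); apply: (@prod_nz K Kidem Ksf _ _ _ _ _ _ (sig g)).
    exact: (Linv Kidem Ksf rep (sig_nz g)).
  by rewrite e sig_nz.
have hv : vv h = rho h i0 i0 *: vv 1%g.
  apply/matrixP => i j; rewrite (ord1 j) [RHS]mxE !vE (rho1 rep).
  case: (eqVneq i i0) => [->|ne]; first by rewrite id_diag mulr1.
  rewrite id_off // mulr0; apply/eqP; apply/negP => /negP hi.
  by move: ne; rewrite (cu hi hnz) eqxx.
by rewrite inHH hv (vtors hv) scale1r.
Qed.

Lemma v_eq g k : sig g = sig k -> vv g = vv k.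
Proof.
move=> e; have := LinkH e; rewrite inHH => /eqP hv.
by rewrite -[k](mulKVg g) vM hv -vM mulg1.
Qed.

Definition rr k : gT := odflt k [pick j | sig j == sig k].

Lemma rr_sig k : sig (rr k) = sig k.
Proof. by rewrite /rr; case: pickP => [j /eqP //| _]. Qed.

Lemma rr_eq k k' : sig k = sig k' -> rr k = rr k'.
Proof.
move=> e; rewrite /rr e; case: pickP => [j //|/(_ k')]; by rewrite eqxx.
Qed.

Lemma rr_idem k : rr (rr k) = rr k.
Proof. exact: rr_eq (rr_sig k). Qed.

Lemma kgP (x y : KG K gT) : (forall k, x k = y k) -> x = y.
Proof. move=> h; apply/ffunP; exact h. Qed.

Definition SS (x : KG K gT) i := \sum_(j | sig j == i) x j.
Definition NN (x : KG K gT) : KG K gT :=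
  [ffun k => if k == rr k then SS x (sig k) else 0].
Definition bad (x : KG K gT) := [pred k | (k != rr k) && (x k != 0)].

Lemma SS_add x y i : SS (kg_add x y) i = SS x i + SS y i.
Proof. by rewrite /SS -big_split; apply: eq_bigr => j _; rewrite ffunE. Qed.

Lemma SS_sd a g i : SS (kg_scale a (kg_delta K g)) i = if sig g == i then a else 0.
Proof.
rewrite /SS; case: ifP => hg.
  rewrite (bigD1 g) //= big1 ?addr0 => [|j /andP [_ hj]]; rewrite !ffunE.
    by rewrite eqxx mulr1.
  by rewrite (negbTE hj) mulr0.
by rewrite big1 // => j /eqP hj; rewrite !ffunE; case: eqP => [e|_];
  [move: hg; rewrite -e hj eqxx | rewrite mulr0].
Qed.

Lemma bad0 x : #|bad x| = 0%N -> NN x = x.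
Proof.
move/card0_eq => hb.
have hk : forall k, k != rr k -> x k = 0.
  move=> k hk; have := hb k; rewrite !inE hk /= => /negbT; by rewrite negbK => /eqP.
apply: kgP => k; rewrite ffunE; case: (eqVneq k (rr k)) => [ek|ne]; last by rewrite hk.
rewrite /SS (bigD1 k) //= big1 ?addr0 // => j /andP [/eqP hj jk].
apply: hk; apply/negP => /eqP ej; move: jk; rewrite ej (rr_eq hj) -ek eqxx.
done.
Qed.

Section WithR.
Variable R : KG K gT -> KG K gT -> Prop.
Hypothesis HR : kg_congr R.
Hypothesis Hgen : forall g h, h \in HH -> R (kg_delta K g) (kg_delta K (g * h)%g).

Lemma Rrefl x : R x x. Proof. by case: HR. Qed.
Lemma Rsym x y : R x y -> R y x. Proof. by case: HR => _ h _ _ _; apply: h. Qed.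
Lemma Rtrans x y z : R x y -> R y z -> R x z.
Proof. by case: HR => _ _ h _ _; apply: h. Qed.

Lemma R_scale c x y : R x y -> R (kg_scale c x) (kg_scale c y).
Proof.
have E : forall w : KG K gT, kg_mul (kg_scale c (kg_delta K (1%g : gT))) w = kg_scale c w.
  move=> w; apply: kgP => k; rewrite !ffunE (bigD1 1%g) //= big1 ?addr0.
    by rewrite !ffunE eqxx mulr1 invg1 mul1g.
  by move=> j hj; rewrite !ffunE (negbTE hj) mulr0 mul0r.
move=> h; rewrite -(E x) -(E y); case: HR => _ _ _ _ hm; exact: hm.
Qed.

Lemma R_addl z x y : R x y -> R (kg_add z x) (kg_add z y).
Proof.
have C : forall a b : KG K gT, kg_add a b = kg_add b a.
  by move=> a b; apply: kgP => k; rewrite !ffunE addrC.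
move=> h; rewrite !(C z); case: HR => _ _ _ ha _; exact: ha.
Qed.

Lemma step x g : g \in bad x ->
  exists x', [/\ R x x', (#|bad x'| < #|bad x|)%N & NN x' = NN x].
Proof.
move=> gb; set a := x g.
set x0 : KG K gT := [ffun k => if k == g then 0 else x k].
have ex : x = kg_add x0 (kg_scale a (kg_delta K g)).
  apply: kgP => k; rewrite !ffunE; case: (eqVneq k g) => [->|ne].
    by rewrite mulr1 add0r.
  by rewrite mulr0 addr0.
exists (kg_add x0 (kg_scale a (kg_delta K (rr g)))); split.
- rewrite {1}ex; apply: R_addl; apply: R_scale.
  have := Hgen g (LinkH (esym (rr_sig g))); by rewrite mulKVg.
- rewrite [X in (_ < X)%N](cardD1 g) gb add1n ltnS.
  apply: eq_leq; apply: eq_card => k; rewrite !inE !ffunE.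
  case: (eqVneq k (rr k)) => [ek|ne] /=; first by rewrite andbF.
  have nr : (k == rr g) = false.
    apply/negP => /eqP e; move: ne; by rewrite e rr_idem eqxx.
  rewrite nr mulr0 addr0; case: (eqVneq k g) => [->|_] /=; by rewrite ?eqxx.
- apply: kgP => k; rewrite !ffunE; case: ifP => // _.
  by rewrite [in RHS]ex !SS_add !SS_sd rr_sig.
Qed.

Lemma RN x : R x (NN x).
Proof.
move: {2}#|bad x| (leqnn #|bad x|) => m; elim: m x => [|m IH] x hx;
  case: (posnP #|bad x|) => [h0|hpos].
- by rewrite (bad0 h0); apply: Rrefl.
- by move: hpos; rewrite lt0n -leqn0 hx.
- by rewrite (bad0 h0); apply: Rrefl.
- move/card_gt0P: hpos => [g gb]; have [x' [h1 h2 h3]] := step gb.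
  rewrite -h3; apply: Rtrans h1 _; apply: IH.
  by rewrite -ltnS; apply: leq_trans h2 hx.
Qed.
End WithR.

Lemma phiS x k : phi x (sig k) 0 = SS x (sig k) * rho k (sig k) i0.
Proof.
rewrite /phi summxE.
rewrite (eq_bigr (fun g => x g * rho g (sig k) i0)); last by move=> g _; rewrite mxE vE.
rewrite (bigID (fun g => sig g == sig k)) /= [X in _ + X]big1 ?addr0.
  rewrite /SS mulr_suml; apply: eq_bigr => g /eqP hg; by rewrite -!vE (v_eq hg).
move=> g hg; case: (eqVneq (rho g (sig k) i0) 0) => [->|ne]; first by rewrite mulr0.
by move: hg; rewrite -(sig_uniq ne) eqxx.
Qed.

Lemma ker1 x y : phi x = phi y -> coset_congr HH x y.
Proof.
move=> e R HR Hgen.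
have hS : forall k, SS x (sig k) = SS y (sig k).
  move=> k; apply: (mul_cancel Ksf (sig_nz k)); by rewrite -!phiS e.
have hN : NN x = NN y by apply: kgP => k; rewrite !ffunE hS.
apply: (Rtrans HR (RN HR Hgen x)); rewrite hN; apply: (Rsym HR); exact: (RN HR Hgen y).
Qed.

Lemma ker2 x y : coset_congr HH x y -> phi x = phi y.
Proof.
move=> hc; apply: (hc (fun a b => phi a = phi b)); first split.
- by [].
- by move=> ? ? ->.
- by move=> ? ? ? -> ->.
- by move=> ? ? ? e; rewrite !phi_add e.
- by move=> ? ? ? e; rewrite !phi_mul e.
move=> g h; rewrite inHH => /eqP hh.
by rewrite !phi_delta vM hh -vM mulg1.
Qed.

Lemma surj (hT : forall i, inorb rho i0 i) v : exists x, phi x = v.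
Proof.
have ev : v = \sum_i v i 0 *: col i (1%:M : 'M[K]_n).
  apply/matrixP => i j; rewrite (ord1 j) summxE (bigD1 i) //= big1 ?addr0.
    by rewrite mxE [col _ _ _ _]mxE id_diag mulr1.
  by move=> k hk; rewrite mxE [col _ _ _ _]mxE id_off ?mulr0 // eq_sym.
rewrite ev; apply: (big_ind (fun w => exists x, phi x = w)).
- exists (kg_zero K gT); rewrite /phi big1 // => g _; by rewrite ffunE scale0r.
- by move=> _ _ [x1 <-] [x2 <-]; exists (kg_add x1 x2); rewrite phi_add.
move=> i _; have /existsP [g hg] := hT i.
have [b hb] := Ksf hg.
have hv : vv g = rho g i i0 *: col i (1%:M : 'M[K]_n).
  apply/matrixP => j k; rewrite (ord1 k) [RHS]mxE vE [col _ _ _ _]mxE.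
  case: (eqVneq j i) => [->|ne]; first by rewrite id_diag mulr1.
  rewrite id_off // mulr0; apply/eqP; apply/negP => /negP hj.
  by move: ne; rewrite (cu hj hg) eqxx.
exists (kg_scale (v i 0 * b) (kg_delta K g)).
by rewrite phi_scale phi_delta hv scalerA -mulrA (mulrC b) hb mulr1.
Qed.

End Main.

Theorem lemma3p17 (gT : finGroupType) (K : comNzSemiRingType)
  (Kidem : idempotent_semiring K) (Ksf : semifield K)
  (n : nat) (rho : gT -> 'M[K]_n) (rep : is_rep rho)
  (indec : indecomposable rho) :
  exists (H : {group gT}) (phi : KG K gT -> 'cV[K]_n),
    [/\ (forall x y, phi (kg_add x y) = phi x + phi y),
        (forall (c : K) x, phi (kg_scale c x) = c *: phi x),
        (forall g x, phi (kg_act g x) = rho g *m phi x),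
        (forall v, exists x, phi x = v) &
        (forall x y, phi x = phi y <-> coset_congr H x y)].
Proof.
pose i0 : 'I_n := Ordinal (proj1 indec).
have hT := transitive Kidem Ksf rep i0 indec.
exists (HH rep i0), (@phi gT K n rho i0); split.
- exact: phi_add.
- exact: phi_scale.
- exact: phi_act.
- move=> v; have := surj Kidem Ksf rep hT v. done.
- move=> x y; split; [exact: ker1 | exact: ker2].
Qed.
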